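(* Let $F(t)\in\mathbb{Z}[t]$ be squarefree and let $D(t)\in\mathbb{Z}[t]$. Suppose that for all but finitely many integers $n$, the squarefree part of $F(n)$ divides $D(n)$. Then $F(t)$ divides $D(t)$ in $\mathbb{Q}[t]$.
   Context: A polynomial $F(t)\in\mathbb{Z}[t]$ is called squarefree if whenever $F(t)=g(t)^2h(t)$ with $g,h\in\mathbb{Z}[t]$, then $g=\pm1$. The squarefree part of a nonzero integer $m$ is the unique squarefree integer $s$ with $m/s$ a perfect square. *)

(* Defs.v *)
From mathcomp Require Import all_boot all_order all_algebra.
Set Implicit Arguments. Unset Strict Implicit. Unset Printing Implicit Defensive.
Import Order.TTheory GRing.Theory Num.Theory.
Local Open Scope ring_scope.

Definition sqfree_poly (F : {poly int}) : Prop :=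
  forall g h : {poly int}, F = g ^+ 2 * h -> g = 1 \/ g = -1.

Definition sqfree_int (s : int) : Prop :=
  s != 0 /\ forall d : int, (d ^+ 2 %| s)%Z -> `|d| = 1.

Definition is_sqfpart (m s : int) : Prop :=
  m != 0 /\ sqfree_int s /\ exists k : int, m = s * k ^+ 2.

(* Main.v *)
Require Import Defs.
From mathcomp Require Import all_boot all_order all_algebra.
From mathcomp Require Import ring zify.
From Stdlib Require Import Classical.
Import Order.TTheory GRing.Theory Num.Theory.
Local Open Scope ring_scope.

Local Notation pQ := (map_poly (intr : int -> rat)).


Lemma hdiff (P : {poly int}) x y : (x - y %| P.[x] - P.[y])%Z.
Proof.
elim/poly_ind: P => [|P c IH]; first by rewrite !horner0 subrr dvdz0.
rewrite !hornerMXaddC.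
have -> : P.[x] * x + c - (P.[y] * y + c) = (P.[x] - P.[y]) * x + P.[y] * (x - y) by ring.
by apply: rpredD; [apply: dvdz_mulr | apply: dvdz_mull].
Qed.

Lemma htaylor (P : {poly int}) x p : (p ^+ 2 %| P.[x + p] - P.[x] - p * P^`().[x])%Z.
Proof.
elim/poly_ind: P => [|P c IH]; first by rewrite deriv0 !horner0 !subrr mulr0 subrr dvdz0.
rewrite derivMXaddC !hornerMXaddC hornerD hornerM hornerX.
have -> : P.[x + p] * (x + p) + c - (P.[x] * x + c) - p * (P.[x] + P^`().[x] * x)
  = (P.[x + p] - P.[x] - p * P^`().[x]) * x + p * (P.[x + p] - P.[x]) by ring.
apply: rpredD; first exact: dvdz_mulr.
have h := hdiff P (x + p) x.
rewrite (_ : x + p - x = p) in h; last by ring.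
by rewrite expr2; apply: dvdz_mul.
Qed.

Lemma pdvdzM (p : nat) (x y : int) : prime p ->
  (p%:Z %| x * y)%Z = (p%:Z %| x)%Z || (p%:Z %| y)%Z.
Proof. by move=> pp; rewrite !dvdzE abszM /=; apply: Euclid_dvdM. Qed.

Lemma sqfpart_ex (m : int) : m != 0 -> exists s k, sqfree_int s /\ m = s * k ^+ 2.
Proof.
move=> m0; have [N leN] := ubnP `|m|%N; elim: N m leN m0 => [//|N IH m lemN m0].
case: (classic (sqfree_int m)) => [sm|nsm].
  by exists m, 1; rewrite expr1n mulr1.
have : ~ (forall d : int, (d ^+ 2 %| m)%Z -> `|d| = 1) by move=> H; apply: nsm; split.
move=> /not_all_ex_not [d] H; have [dm nd] := imply_to_and _ _ H.
have [m' em] := dvdzP dm.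
have d0 : d != 0 by apply: contra_neq m0 => d0; rewrite em d0 expr0n mulr0.
have m'0 : m' != 0 by apply: contra_neq m0 => m'0; rewrite em m'0 mul0r.
have dge2 : (2 <= `|d|)%N.
  have : `|d|%N != 1%N by apply/eqP => h; apply: nd; rewrite -abszE h.
  by move: d0; rewrite -absz_gt0; lia.
have lt : (`|m'| < N)%N.
  have : `|m|%N = (`|m'| * `|d| ^ 2)%N by rewrite em abszM abszX.
  move: lemN; rewrite -absz_gt0 in m'0; nia.
have [s [k [ss ek]]] := IH m' lt m'0.
exists s, (k * d); split => //; rewrite em ek; ring.
Qed.


Lemma schur (Q : {poly int}) (B : int) : B != 0 -> (1 < size Q)%N ->
  exists (p : nat) (a : int), [/\ prime p, ~~ (p%:Z %| B)%Z & (p%:Z %| Q.[a])%Z].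
Proof.
move=> B0 sQ.
have [c0|c0] := eqVneq Q.[0] 0.
  have [p ltp pp] := prime_above `|B|%N.
  exists p, p%:Z; split => //.
    rewrite dvdzE /=; apply/negP => h.
    have := dvdn_leq _ h; rewrite absz_gt0 => /(_ B0); lia.
  by have := hdiff Q p 0; rewrite subr0 c0 subr0.
set c := Q.[0] in c0.
pose L : {poly int} := (c * B) *: 'X.
have sL : size L = 2%N by rewrite size_scale ?size_polyX // mulf_neq0.
pose P2 := Q \Po L.
have sP2 : size P2 = size Q by rewrite size_comp_poly2.
have sc : (size c%:P < size P2)%N by apply: leq_ltn_trans (size_polyC_leq1 c) _; rewrite sP2.
have nz1 : P2 - c%:P != 0.
  by rewrite -size_poly_gt0 size_polyDl ?size_polyN // (leq_trans _ sc).
have nz2 : P2 != 0 by rewrite -size_poly_gt0 (leq_trans _ sc).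
have nz3 : P2 + c%:P != 0 by rewrite -size_poly_gt0 size_polyDl // (leq_trans _ sc).
pose T := (P2 - c%:P) * P2 * (P2 + c%:P).
have T0 : T != 0 by rewrite !mulf_neq0.
pose rs := map (fun i : nat => i%:Z) (iota 0 (size T)).
have urs : uniq rs by rewrite map_inj_uniq ?iota_uniq // => x y [].
have : ~~ all (root T) rs.
  by apply/negP => H; have := max_poly_roots T0 H urs; rewrite size_map size_iota ltnn.
case/allPn => y _ ny.
have eP2 : P2.[y] = Q.[c * B * y] by rewrite horner_comp /L hornerZ hornerX.
move: ny; rewrite /root /T !hornerE eP2.
set v := Q.[c * B * y] => ny.
have [w ew] := dvdzP (hdiff Q (c * B * y) 0).
rewrite subr0 -/v -/c in ew.
pose t := 1 + w * B * y.
have vt : v = c * t by rewrite -(subrK c v) ew /t; ring.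
have t1 : (1 < `|t|)%N.
  have tn1 : t != 1 by apply: contraNneq ny => t1; rewrite vt t1 mulr1 subrr !mul0r.
  have tn0 : t != 0 by apply: contraNneq ny => t1; rewrite vt t1 mulr0 mulr0 mul0r.
  have tn2 : t != -1 by apply: contraNneq ny => t1; rewrite vt t1 mulrN1 addNr mulr0.
  lia.
have [p pp pt] := pdivP t1.
exists p, (c * B * y); split => //; last first.
  by rewrite -/v vt; apply: dvdz_mull; rewrite dvdzE.
apply/negP => pB.
have : (p%:Z %| t - w * B * y)%Z.
  by apply: rpredB; [rewrite dvdzE | apply: dvdz_mulr; apply: dvdz_mull].
rewrite /t addrK dvdz1 /= => /eqP p1; move: pp; rewrite p1.
done.
Qed.


Lemma notin_big (S : seq int) (n : int) :
  (\sum_(t <- S) `|t| < n) -> n \notin S.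
Proof.
move=> h; apply/negP => nS.
move: h; rewrite (big_rem n nS) /= => h.
have h1 : `|n| <= `|n| + \sum_(t <- rem n S) `|t| by rewrite lerDl; apply: sumr_ge0.
have := lt_le_trans (le_lt_trans (le_trans (ler_norm n) h1) h) (lexx n).
by rewrite ltxx.
Qed.

Lemma core (F D G R U V : {poly int}) (m N : int) (S : seq int) :
  m != 0 -> m *: F = G * R -> N != 0 ->
  U * G + V * (G^`() * D * R) = N%:P -> (1 < size G)%N ->
  (forall n : int, n \notin S -> forall s : int, is_sqfpart F.[n] s -> (s %| D.[n])%Z) ->
  False.
Proof.
move=> m0 eF N0 eB sG H.
have [p [a0 [pp npB pG]]] := @schur G (m * N) (mulf_neq0 m0 N0) sG.
set P := p%:Z.
have P0 : P != 0 by rewrite /P; case: (p) pp.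
have npN : ~~ (P %| N)%Z by apply: contra npB; apply: dvdz_mull.
have npm : ~~ (P %| m)%Z by apply: contra npB; apply: dvdz_mulr.
have key : forall x, (P %| x - a0)%Z ->
   [/\ (P %| G.[x])%Z, ~~ (P %| G^`().[x])%Z, ~~ (P %| D.[x])%Z & ~~ (P %| R.[x])%Z].
  move=> x hx.
  have hG : (P %| G.[x])%Z.
    rewrite -(subrK G.[a0] G.[x]); apply: rpredD => //.
    exact: dvdz_trans hx (hdiff G x a0).
  have ev := congr1 (fun q => q.[x]) eB; rewrite /= hornerD !hornerM hornerC in ev.
  have nW : ~~ (P %| G^`().[x] * D.[x] * R.[x])%Z.
    apply: contra npN => hW; rewrite -ev; apply: rpredD; first exact: dvdz_mull.
    exact: dvdz_mull.
  move: nW; rewrite !pdvdzM // !negb_or => /andP[/andP[-> ->] ->].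
  by split.
have [n0 [hn0 nG0]] : exists n0, (P %| n0 - a0)%Z /\ ~~ (P ^+ 2 %| G.[n0])%Z.
  case: (boolP (P ^+ 2 %| G.[a0])%Z) => h; last by exists a0; rewrite subrr dvdz0.
  exists (a0 + P); split; first by rewrite addrAC subrr add0r.
  apply/negP => h2.
  have [_ nG' _ _] : _ := key a0 ltac:(by rewrite subrr dvdz0).
  apply: (negP nG').
  have t := htaylor G a0 P.
  have : (P ^+ 2 %| P * G^`().[a0])%Z.
    have -> : P * G^`().[a0] = (G.[a0 + P] - G.[a0]) - (G.[a0 + P] - G.[a0] - P * G^`().[a0]) by ring.
    by apply: rpredB => //; apply: rpredB.
  by rewrite expr2 dvdz_mul2l.
pose j := \sum_(t <- S) `|t| + `|n0| + 1.
pose n := n0 + P ^+ 2 * j.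
have nS : n \notin S.
  apply: notin_big.
  have P1 : 1 <= P ^+ 2.
    have p1 : (1 <= p)%N := prime_gt0 pp.
    by rewrite /P exprn_ege1 // lez_nat.
  set z := \sum_(t <- S) `|t|.
  have z0 : 0 <= z by apply: sumr_ge0 => i _.
  have j0 : 0 <= j by rewrite /j addr_ge0 // addr_ge0.
  have := ler_peMl j0 P1.
  have := ler_norm (- n0); rewrite normrN.
  rewrite /n /j -/z; set y := P ^+ 2 * _.
  move: z0; clear; lia.
have hn : (P %| n - a0)%Z.
  have -> : n - a0 = (n0 - a0) + P * (P * j) by rewrite /n; ring.
  by apply: rpredD => //; apply: dvdz_mulr.
have nGn : ~~ (P ^+ 2 %| G.[n])%Z.
  apply: contra nG0 => h.
  rewrite -(subrK G.[n] G.[n0]); apply: rpredD => //.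
  apply: dvdz_trans (hdiff G n0 n).
  have -> : n0 - n = P ^+ 2 * (- j) by rewrite /n; ring.
  exact: dvdz_mulr.
have [pGn _ pDn pRn] := key n hn.
have eFn : m * F.[n] = G.[n] * R.[n].
  by rewrite -hornerM -eF hornerZ.
have cPR : coprimez (P ^+ 2) R.[n].
  by apply: coprimezXl; rewrite coprimezE /= prime_coprime.
have nP2F : ~~ (P ^+ 2 %| F.[n])%Z.
  apply: contra nGn => h.
  by rewrite -(Gauss_dvdzl _ cPR) -eFn; apply: dvdz_mull.
have Fn0 : F.[n] != 0 by apply: contraNneq nP2F => ->; apply: dvdz0.
have [s [k [ss eFs]]] := @sqfpart_ex F.[n] Fn0.
have sD := H n nS s (conj Fn0 (conj ss (ex_intro _ k eFs))).
have PF : (P %| F.[n])%Z.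
  have : (P %| m * F.[n])%Z by rewrite eFn; apply: dvdz_mulr.
  by rewrite pdvdzM // (negbTE npm).
move: PF; rewrite eFs pdvdzM // expr2 pdvdzM // orbb => /orP[Ps|Pk].
  by apply: (negP pDn); apply: dvdz_trans sD.
apply: (negP nP2F); rewrite eFs expr2; apply: dvdz_mull.
by rewrite -expr2 dvdz_exp2r.
Qed.




Lemma pQ_inj : injective pQ.
Proof. by apply: map_inj_poly; [apply: intr_inj | rewrite rmorph0]. Qed.

Lemma irr_div (h : {poly rat}) : (1 < size h)%N -> exists q, irreducible_poly q /\ q %| h.
Proof.
have [N leN] := ubnP (size h); elim: N h leN => [//|N IH h lehN sh].
case: (classic (irreducible_poly h)) => [ih|nih]; first by exists h; split.
have : ~ (forall q : {poly rat}, size q != 1%N -> q %| h -> q %= h) by move=> H; apply: nih; split.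
move=> /not_all_ex_not [q Hq].
have [s1 Hq2] := imply_to_and _ _ Hq.
have [qh nqh] := imply_to_and _ _ Hq2.
have h0 : h != 0 by rewrite -size_poly_gt0 ltnW.
have q0 : q != 0 by apply/eqP => q0; move: qh; rewrite q0 dvd0p; apply/negP.
have sq : (1 < size q)%N by move: s1 q0; rewrite -size_poly_gt0; case: (size q) => [|[]].
have lt : (size q < size h)%N.
  rewrite ltn_neqAle (dvdp_leq h0 qh) andbT.
  apply/negP => /eqP e; apply: nqh.
  by rewrite -(dvdp_size_eqp qh) e.
have lt2 : (size q < N)%N by rewrite -ltnS (leq_trans _ lehN).
have [r [ir rq]] := IH q lt2 sq.
by exists r; split => //; apply: dvdp_trans rq qh.
Qed.

Lemma all_div (Fq Dq : {poly rat}) : Fq != 0 ->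
  (forall q, q ^+ 2 %| Fq -> (size q <= 1)%N) ->
  (forall q, irreducible_poly q -> q %| Fq -> q %| Dq) -> Fq %| Dq.
Proof.
move=> F0 sqF irrD.
suff : forall h, h %| Fq -> h %| Dq by apply; apply: dvdpp.
move=> h; have [N leN] := ubnP (size h); elim: N h leN => [//|N IH h lehN hF].
have h0 : h != 0 by apply/eqP => h0; move: hF; rewrite h0 dvd0p; apply/negP.
have [sh|sh] := leqP (size h) 1.
  have /eqP s1 : size h == 1%N by move: h0 sh; rewrite -size_poly_gt0; case: (size h) => [|[]].
  have : h %= 1 by rewrite -size_poly_eq1 s1.
  by move/eqp_dvdl => ->; apply: dvd1p.
have [q [iq qh]] := @irr_div h sh.
have q0 := irredp_neq0 iq.
have eh : h = (h %/ q) * q by rewrite divpK.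
have h'0 : h %/ q != 0 by apply/eqP => e; move: h0; rewrite eh e mul0r eqxx.
have sqq : (1 < size q)%N := iq.1.
have lt : (size (h %/ q)%R < size h)%N.
  have e2 : size h = (size (h %/ q)%R + size q).-1 by rewrite {1}eh size_mul.
  rewrite e2; move: sqq; lia.
have h'F : h %/ q %| Fq by apply: dvdp_trans hF; rewrite {2}eh dvdp_mulIl.
have lt2 : (size (h %/ q)%R < N)%N by rewrite -ltnS (leq_trans _ lehN).
have h'D := IH _ lt2 h'F.
have qD : q %| Dq by apply: irrD => //; apply: dvdp_trans hF.
have cq : coprimep (h %/ q) q.
  rewrite coprimep_sym coprimep_def; set e := gcdp q (h %/ q).
  have eq : e %| q by apply: dvdp_gcdl.
  apply/negPn/negP => ne.
  have := iq e ne eq => eqe.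
  have qh' : q %| h %/ q by rewrite -(eqp_dvdl _ eqe) dvdp_gcdr.
  have : q ^+ 2 %| Fq.
    by apply: dvdp_trans hF; rewrite eh expr2 dvdp_mul.
  by move/sqF; rewrite leqNgt sqq.
by rewrite eh Gauss_dvdp // h'D qD.
Qed.




Lemma sqQ (F : {poly int}) : sqfree_poly F ->
  forall q : {poly rat}, q ^+ 2 %| pQ F -> (size q <= 1)%N.
Proof.
move=> sF q; have [Q [a a0 ->]] := rat_poly_scale q.
have a0' : (a%:~R^-1 : rat) != 0 by rewrite invr_eq0 intr_eq0.
rewrite exprZn dvdpZl ?expf_neq0 // -rmorphXn dvdp_rat_int => /dvdpP_int [r er].
rewrite zprimitiveM -expr2 in er.
rewrite size_scale // size_rat_int_poly -size_zprimitive.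
by case: (sF _ _ er) => ->; rewrite ?size_polyN size_poly1.
Qed.

Lemma int_bezout (A B : {poly int}) : coprimep (pQ A) (pQ B) ->
  exists U V N, N != 0 /\ U * A + V * B = N%:P.
Proof.
case/Bezout_coprimepP => [[u v]] /=.
rewrite -size_poly_eq1 => /size_poly1P [e e0 ee].
have [U [a a0 eu]] := rat_poly_scale u.
have [V [b b0 ev]] := rat_poly_scale v.
have eU : pQ U = a%:~R *: u by rewrite eu scalerKV ?intr_eq0.
have eV : pQ V = b%:~R *: v by rewrite ev scalerKV ?intr_eq0.
pose X := (b *: U) * A + (a *: V) * B.
have eX : pQ X = (a%:~R * b%:~R * e)%:P.
  rewrite /X rmorphD !rmorphM /= !map_polyZ eU eV -!mul_polyC.
  rewrite -ee /=; ring.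
have /size_poly1P [N N0 eN] : size X == 1%N.
  by rewrite -size_rat_int_poly eX size_polyC !mulf_neq0 ?intr_eq0.
by exists (b *: U), (a *: V), N.
Qed.




Lemma irr_coprime (q w : {poly rat}) : irreducible_poly q -> ~~ (q %| w) -> coprimep q w.
Proof.
move=> iq nqw; rewrite coprimep_def; apply/negPn/negP => ne.
have eqe := iq (gcdp q w) ne (dvdp_gcdl q w).
by apply: (negP nqw); rewrite -(eqp_dvdl _ eqe) dvdp_gcdr.
Qed.

Lemma deriv_neq0 (q : {poly rat}) : (1 < size q)%N -> q^`() != 0.
Proof.
move=> sq; apply/eqP => h.
have := congr1 (fun p : {poly rat} => p`_((size q).-2)) h; rewrite /= coef_deriv coef0.
have -> : ((size q).-2).+1 = (size q).-1 by lia.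
move/eqP; rewrite mulrn_eq0 -lead_coefE lead_coef_eq0 => /orP[/eqP|/eqP q0].
  lia.
by move: sq; rewrite q0 size_poly0.
Qed.

Theorem lemma5p3 (F D : {poly int}) :
  sqfree_poly F ->
  (exists S : seq int, forall n : int, n \notin S ->
     forall s : int, is_sqfpart F.[n] s -> (s %| D.[n])%Z) ->
  map_poly (intr : int -> rat) F %| map_poly (intr : int -> rat) D.
Proof.
move=> sF [S HS].
have F0 : F != 0.
  apply/eqP => F0; have := sF 2 0; rewrite mulr0 F0 => /(_ erefl) [] /(congr1 (fun p : {poly int} => p.[0])); rewrite !hornerE //.
set Fq := pQ F; set Dq := pQ D.
have Fq0 : Fq != 0 by rewrite -size_poly_gt0 size_rat_int_poly size_poly_gt0.
have sqFq := @sqQ F sF.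
case: (classic (exists q, irreducible_poly q /\ q %| Fq /\ ~~ (q %| Dq))) => [[q [iq [qF nqD]]] | nex]; last first.
  apply: all_div => // q iq qF; apply/negPn/negP => nqD; apply: nex; exists q; split => //.
exfalso.
set r := Fq %/ q.
have eF : Fq = r * q by rewrite divpK.
have sq : (1 < size q)%N := iq.1.
have q0 : q != 0 := irredp_neq0 iq.
have c1 : coprimep q q^`().
  apply: irr_coprime => //; apply/negP => h.
  have := dvdp_leq (@deriv_neq0 q sq) h; rewrite leqNgt lt_size_deriv //.
have c2 : coprimep q Dq := @irr_coprime q Dq iq nqD.
have c3 : coprimep q r.
  apply: irr_coprime => //; apply/negP => h.
  have : q ^+ 2 %| Fq by rewrite eF expr2 dvdp_mul.
  by move/sqFq; rewrite leqNgt sq.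
have cW : coprimep q (q^`() * Dq * r) by rewrite !coprimepMr c1 c2 c3.
have [G [a a0 eq]] := rat_poly_scale q.
have [R [b b0 er]] := rat_poly_scale r.
have eG : pQ G = a%:~R *: q by rewrite eq scalerKV ?intr_eq0.
have eR : pQ R = b%:~R *: r by rewrite er scalerKV ?intr_eq0.
have cGW : coprimep (pQ G) (pQ (G^`() * D * R)).
  rewrite !rmorphM /= -deriv_map eG eR derivZ -/Dq.
  rewrite -!scalerAl -!scalerAr.
  by rewrite coprimepZl ?coprimepZr ?intr_eq0.
have [U [V [N [N0 eB]]]] := @int_bezout _ _ cGW.
have eFI : (a * b) *: F = G * R.
  apply: pQ_inj.
  rewrite map_polyZ !rmorphM /= eG eR -/Fq eF -!mul_polyC ?polyCM; ring.
have sG : (1 < size G)%N by rewrite -size_rat_int_poly eG size_scale ?intr_eq0.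
exact: (@core F D G R U V (a * b) N S (mulf_neq0 a0 b0) eFI N0 eB sG HS).
Qed.
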